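(* Let $n\ge 1$, $0<\alpha\le 1$, let $\Omega\subset\mathbb{R}^n$ be a bounded domain, and let $f\in C(\Omega)$ be bounded with $f\le 0$. Let $u:\mathbb{R}^n\to\mathbb{R}$ be a viscosity supersolution to $\mathcal{L}_\infty u=f$ in $\Omega$. Assume there exists $x_0\in\Omega$ such that $u(y)\ge u(x_0)$ for all $y\in\mathbb{R}^n\setminus\Omega$. Then $u$ is constant on $\mathbb{R}^n$.
   Context: For $0<\alpha\le1$ and a function $\varphi:\mathbb{R}^n\to\mathbb{R}$, the nonlocal infinity Laplacian is $\mathcal{L}_\infty\varphi(x)=\mathcal{L}^+_\infty\varphi(x)+\mathcal{L}^-_\infty\varphi(x)$, where $\mathcal{L}^+_\infty\varphi(x)=\sup_{y\in\mathbb{R}^n}\frac{\varphi(y)-\varphi(x)}{|x-y|^\alpha}$ and $\mathcal{L}^-_\infty\varphi(x)=\inf_{y\in\mathbb{R}^n}\frac{\varphi(y)-\varphi(x)}{|x-y|^\alpha}$ (with $y\neq x$). Viscosity supersolution: a lower semicontinuous $u:\mathbb{R}^n\to\mathbb{R}$ with $|u(x)|\le C(1+|x|)^\beta$ for some $C>0$, $\beta<\alpha$, is a viscosity supersolution to $\mathcal{L}_\infty u=f$ in $\Omega$ if for every $x_0\in\Omega$ and every locally Lipschitz continuous $\varphi:\mathbb{R}^n\to\mathbb{R}$ with $|\varphi(x)|\le C(1+|x|)^\beta$ for some $C>0$, $\beta<\alpha$, such that $\varphi(x_0)=u(x_0)$ and $u\ge\varphi$ on $\mathbb{R}^n$, one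 has $\mathcal{L}_\infty\varphi(x_0)\le f(x_0)$. Viscosity subsolutions are defined analogously with $u$ upper semicontinuous, $u\le\varphi$ on $\mathbb{R}^n$, and $\mathcal{L}_\infty\varphi(x_0)\ge f(x_0)$; a viscosity solution is a continuous function that is both. *)

(* Defs.v *)
From mathcomp Require Import all_boot all_order all_algebra.
From mathcomp Require Import all_classical all_reals all_analysis.
Set Implicit Arguments. Unset Strict Implicit. Unset Printing Implicit Defensive.
Import Order.TTheory GRing.Theory Num.Theory.
Import numFieldNormedType.Exports.
Local Open Scope classical_set_scope.
Local Open Scope ring_scope.

Section Defs.
Variables (R : realType) (n : nat).
Notation V := 'rV[R]_n.

(* Euclidean norm |x| on R^n (the library norm on 'rV is the sup norm) *)
Definition enorm (x : V) : R := Num.sqrt (\sum_(i < n) (x ord0 i) ^+ 2).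

Definition growth_ok (alpha : R) (phi : V -> R) : Prop :=
  exists C beta : R, 0 < C /\ beta < alpha /\
    forall x, `|phi x| <= C * powR (1 + enorm x) beta.

Definition locally_lipschitz (phi : V -> R) : Prop :=
  forall x : V, exists r L : R, 0 < r /\
    forall y z : V, enorm (y - x) < r -> enorm (z - x) < r ->
      `|phi y - phi z| <= L * enorm (y - z).

Definition nl_quot (alpha : R) (phi : V -> R) (x : V) : set (\bar R) :=
  [set ((phi y - phi x) / powR (enorm (x - y)) alpha)%:E | y in [set y | y != x]].

Definition Lplus (alpha : R) (phi : V -> R) (x : V) : \bar R :=
  ereal_sup (nl_quot alpha phi x).
Definition Lminus (alpha : R) (phi : V -> R) (x : V) : \bar R :=
  ereal_inf (nl_quot alpha phi x).
Definition Linf (alpha : R) (phi : V -> R) (x : V) : \bar R :=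
  (Lplus alpha phi x + Lminus alpha phi x)%E.

Definition visc_supersolution (alpha : R) (Omega : set V) (f u : V -> R) : Prop :=
  lower_semicontinuous (fun x => (u x)%:E) /\ growth_ok alpha u /\
  forall (x0 : V) (phi : V -> R), Omega x0 ->
    locally_lipschitz phi -> growth_ok alpha phi ->
    phi x0 = u x0 -> (forall x, phi x <= u x) ->
    (Linf alpha phi x0 <= (f x0)%:E)%E.

Definition bounded_domain (Omega : set V) : Prop :=
  Omega !=set0 /\ open Omega /\ connected Omega /\
  exists M : R, forall x, Omega x -> enorm x <= M.
End Defs.

(* Main.v *)
Require Import Defs.
From mathcomp Require Import all_boot all_order all_algebra.
From mathcomp Require Import all_classical all_reals all_analysis.
From mathcomp Require Import ring lra.
Import Order.TTheory GRing.Theory Num.Theory.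
Import numFieldNormedType.Exports.
Local Open Scope classical_set_scope.
Local Open Scope ring_scope.

Lemma coord_le_enorm (R : realType) n (x : 'rV[R]_n) i : `|x ord0 i| <= enorm x.
Proof.
rewrite /enorm -(sqrtr_sqr (x ord0 i)) ler_sqrt; last first.
  by apply: sumr_ge0 => j _; rewrite sqr_ge0.
rewrite (bigD1 i) //= lerDl; apply: sumr_ge0 => j _; exact: sqr_ge0.
Qed.

Lemma norm_le_enorm (R : realType) n (x : 'rV[R]_n) : `|x| <= enorm x.
Proof.
have -> : `|x| = mx_norm x by [].
rewrite mx_normrE; apply: bigmax_le.
  by rewrite /enorm sqrtr_ge0.
move=> [i j] _ /=; rewrite (ord1 i); exact: coord_le_enorm.
Qed.
Lemma lsc_min (R : realType) (T : topologicalType) (K : set T) (g : T -> R) :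
  compact K -> K !=set0 -> (forall a, open [set x | a < g x]) ->
  exists2 c, K c & forall y, K y -> g c <= g y.
Proof.
move=> cK [k Kk] og.
case: (pselect (exists2 c, K c & forall y, K y -> g c <= g y)) => // H.
exfalso.
have H' : forall c, K c -> exists2 y, K y & g y < g c.
  move=> c Kc; case: (pselect (exists2 y, K y & g y < g c)) => // Hn.
  exfalso; apply: H; exists c => // y Ky.
  rewrite leNgt; apply/negP => lt; apply: Hn; exists y => //.
pose F := filter_from K (fun y => [set z | K z /\ g z <= g y]).
have FF : ProperFilter F.
  apply: filter_from_proper; last by move=> y Ky; exists y.
  apply: filter_from_filter; first by exists k.
  move=> i j Ki Kj; have [le|le] := leP (g i) (g j).
    by exists i => // z [Kz gz]; split; split => //; apply: le_trans le.
  by exists j => // z [Kz gz]; split; split => //; apply: le_trans (ltW le).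
have FK : F K by exists k => // z [].
have [c [Kc clc]] := cK F FF FK.
have [y Ky lty] := H' c Kc.
have Fy : F [set z | K z /\ g z <= g y] by exists y.
have Nc : nbhs c [set x | g y < g x].
  by apply: open_nbhs_nbhs; split => //; apply: og.
have [z [[_ z1] z2]] := clc _ _ Fy Nc.
by move: z2 => /= z2; move: (lt_le_trans z2 z1); rewrite ltxx.
Qed.

Lemma maxr0_dist (R : realDomainType) (A B : R) :
  `|Order.max 0 A - Order.max 0 B| <= `|A - B|.
Proof.
have e1 : A - B <= `|A - B| := ler_norm _.
have e2 : B - A <= `|A - B| by rewrite distrC ler_norm.
have [hA|hA] := leP A 0; have [hB|hB] := leP B 0;
  rewrite ler_norml; apply/andP; split; lra.
Qed.

Theorem mainTheorem1 (R : realType) (n : nat) (alpha : R)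
  (Omega : set 'rV[R]_n) (f u : 'rV[R]_n -> R) (x0 : 'rV[R]_n) :
  (0 < n)%N -> 0 < alpha -> alpha <= 1 ->
  bounded_domain Omega ->
  {within Omega, continuous f} ->
  (exists M : R, forall x, Omega x -> `|f x| <= M) ->
  (forall x, Omega x -> f x <= 0) ->
  visc_supersolution alpha Omega f u ->
  Omega x0 ->
  (forall y, ~ Omega y -> u x0 <= u y) ->
  forall x y, u x = u y.
Proof.
move=> _ a0 _ [_ [_ [_ [M HM]]]] _ _ fle0 [lsc [_ visc]] Ox0 Hout.
have og : forall a, open [set x | a < u x].
  move=> a; have := (proj1 (lower_semicontinuousP _) lsc a).
  by congr open; apply/seteqP; split => x /=; rewrite lte_fin.
pose K := [set v : 'rV[R]_n | forall i, `[-M, M]%classic (v ord0 i)].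
have cK : compact K by apply: (@rV_compact _ n (fun=> `[-M, M]%classic)) => i; exact: segment_compact.
have OK : forall x, Omega x -> K x.
  move=> x Ox i /=; rewrite in_itv /= -ler_norml.
  exact: le_trans (@coord_le_enorm _ _ x i) (HM _ Ox).
have [c Kc cmin] := @lsc_min _ _ _ _ cK (ex_intro _ x0 (OK _ Ox0)) og.
have [z [Oz zmin]] : exists z, Omega z /\ forall y, u z <= u y.
  have gmin : forall y, u c <= u y.
    move=> y; case: (pselect (K y)) => Ky; first exact: cmin.
    apply: le_trans (cmin _ (OK _ Ox0)) _; apply: Hout => Oy; exact/Ky/OK.
  case: (pselect (Omega c)) => Oc; first by exists c.
  exists x0; split => // y; apply: le_trans (Hout _ Oc) (gmin y).
suff allz : forall w, u w = u z by move=> x y; rewrite !allz.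
move=> w; apply/eqP; rewrite eq_le (zmin w) andbT leNgt; apply/negP => lt.
pose d := (u w - u z) / 2.
have d0 : 0 < d by rewrite /d divr_gt0 // subr_gt0.
have dlt : u z + d < u w by rewrite /d; lra.
have [r r0 Hr] : exists2 r, 0 < r & forall y, `|w - y| < r -> u z + d < u y.
  have dltE : ((u z + d)%:E < (u w)%:E)%E by rewrite lte_fin.
  have [V NV HV] := lsc w _ dltE.
  have [r r0 Hr] := proj1 (nbhs_ballP _ _) NV.
  by exists r => // y hy; rewrite -lte_fin; apply: HV; apply: Hr; rewrite -ball_normE.
pose phi := fun y => u z + d * Order.max 0 (1 - `|y - w| / r).
have zfar : r <= `|z - w|.
  rewrite leNgt; apply/negP => h; have := Hr z; rewrite distrC => /(_ h); lra.
have mx1 : forall y, Order.max 0 (1 - `|y - w| / r) <= 1.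
  move=> y; rewrite ge_max ler01 /= lerBlDr lerDl divr_ge0 //; exact: ltW.
have mx0 : forall y, 0 <= Order.max 0 (1 - `|y - w| / r) by move=> y; rewrite le_max lexx.
have phiz : phi z = u z.
  rewrite /phi max_l ?mulr0 ?addr0 // subr_le0 ler_pdivlMr // mul1r //.
have lip : locally_lipschitz phi.
  move=> x; exists 1, (d / r); split => // y y' _ _.
  rewrite /phi opprD addrACA subrr add0r -mulrBr normrM (gtr0_norm d0).
  rewrite -mulrA ler_pM2l //.
  apply: le_trans (maxr0_dist _ _ _) _.
  have -> : 1 - `|y - w| / r - (1 - `|y' - w| / r) = (`|y' - w| - `|y - w|) / r.
    by rewrite mulrBl; ring.
  rewrite normrM normfV (gtr0_norm r0) mulrC ler_pM2l ?invr_gt0 //.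
  apply: le_trans (ler_dist_dist _ _) _.
  have -> : y' - w - (y - w) = - (y - y') by rewrite !opprB addrA subrK.
  rewrite normrN; exact: norm_le_enorm.
have gro : growth_ok alpha phi.
  exists (`|u z| + d + 1), 0; split; first by have := normr_ge0 (u z); lra.
  split => // x; rewrite powRr0 mulr1 /phi.
  apply: le_trans (ler_normD _ _) _.
  rewrite normrM (gtr0_norm d0) (ger0_norm (mx0 x)).
  have := mx1 x; have := mx0 x; nra.
have ple : forall y, phi y <= u y.
  move=> y; rewrite /phi; have := mx1 y.
  have [h|h] := leP (1 - `|y - w| / r) 0 => h1.
    by rewrite mulr0 addr0; exact: zmin.
  have : `|w - y| < r.
    rewrite distrC; move: h; rewrite subr_gt0 ltr_pdivrMr // mul1r //.
  move/Hr; nra.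
have := visc z phi Oz lip gro phiz ple.
have fz := fle0 _ Oz.
have wz : w != z by apply/eqP => e; move: lt; rewrite e ltxx.
have pw : phi w = u z + d.
  by rewrite /phi subrr normr0 mul0r subr0 max_r ?ler01 // mulr1.
have q0 : 0 < (phi w - phi z) / powR (enorm (z - w)) alpha.
  rewrite phiz pw addrAC subrr add0r divr_gt0 // powR_gt0 //.
  exact: lt_le_trans r0 (le_trans zfar (@norm_le_enorm _ _ (z - w))).
have Lp : (((phi w - phi z) / powR (enorm (z - w)) alpha)%:E <= Lplus alpha phi z)%E.
  by apply: ereal_sup_ubound; exists w.
have Lm : (0 <= Lminus alpha phi z)%E.
  apply/ereal_infP => _ [y yz <-]; rewrite lee_fin phiz.
  apply: divr_ge0; last exact: powR_ge0.
  by rewrite /phi addrAC subrr add0r mulr_ge0 // ltW.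
move=> HL.
have := leeD Lp Lm; rewrite adde0 => H1.
have := le_trans H1 HL; rewrite lee_fin => H2.
lra.
Qed.
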